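(* Let $d\in\mathbb{N}$ and let $P,Q\in\mathbb{C}[x]$. The following are equivalent: (i) there exist $\vec\theta=(\theta_0,\dots,\theta_d)\in\mathbb{R}^{d+1}$, $\vec\phi=(\phi_0,\dots,\phi_d)\in\mathbb{R}^{d+1}$ and $\lambda\in\mathbb{R}$ such that, for every unitary $U$ (on any finite-dimensional Hilbert space), $$\Big(\prod_{j=1}^{d} R(\theta_j,\phi_j,0)\,A\Big)R(\theta_0,\phi_0,\lambda)=\begin{bmatrix}P(U)&\cdot\\ Q(U)&\cdot\end{bmatrix};$$ (ii) $\deg P\le d$, $\deg Q\le d$, and $|P(x)|^2+|Q(x)|^2=1$ for all $x\in\mathbb{T}$. Moreover, for every choice of $\vec\theta,\vec\phi\in\mathbb{R}^{d+1}$, $\lambda\in\mathbb{R}$, the left-hand side of (i) has the block form $\begin{bmatrix}P(U)&\cdot\\ Q(U)&\cdot\end{bmatrix}$ for some polynomials $P,Q$ satisfying (ii).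
   Context: $\mathbb{T}=\{x\in\mathbb{C}:|x|=1\}$. For a unitary $U$ on a Hilbert space $\mathcal{H}$, operators on $\mathbb{C}^2\otimes\mathcal{H}$ are written as $2\times 2$ block matrices with respect to the first (ancilla qubit) factor; a dot denotes an unspecified block. The signal operator is $A=|0\rangle\langle 0|\otimes U+|1\rangle\langle 1|\otimes I=\begin{bmatrix}U&0\\0&I\end{bmatrix}$, and the signal processing operator is $R(\theta,\phi,\lambda)=\begin{bmatrix}e^{i(\lambda+\phi)}\cos\theta & e^{i\phi}\sin\theta\\ e^{i\lambda}\sin\theta & -\cos\theta\end{bmatrix}\otimes I$. The product is ordered so that the operator equals $R(\theta_d,\phi_d,0)A\,R(\theta_{d-1},\phi_{d-1},0)A\cdots R(\theta_1,\phi_1,0)A\,R(\theta_0,\phi_0,\lambda)$. *)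

(* Defs.v *)
From HB Require Import structures.
From mathcomp Require Import all_boot all_order all_algebra.
From mathcomp Require Import complex.
From mathcomp Require Import reals trigo.
Set Implicit Arguments. Unset Strict Implicit. Unset Printing Implicit Defensive.
Import Order.TTheory GRing.Theory Num.Theory.
Local Open Scope ring_scope.
Local Open Scope complex_scope.

Section QSP.
Variable R : realType.
Local Notation C := R[i].

Definition expi (t : R) : C := (cos t) +i* (sin t).

Definition rc (x : R) : C := x%:C.

Definition adjmx n (U : 'M[C]_n) : 'M[C]_n := (map_mx Num.conj U)^T.
Definition unitary_mx n (U : 'M[C]_n) : Prop :=
  U *m adjmx U = 1%:M /\ adjmx U *m U = 1%:M.

(* signal operator A = |0><0| (x) U + |1><1| (x) I *)
Definition sig_op n (U : 'M[C]_n.+1) : 'M[C]_(n.+1 + n.+1) :=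
  block_mx U 0 0 1%:M.

(* signal processing operator R(theta, phi, lambda) (x) I *)
Definition sp_op n (th ph lam : R) : 'M[C]_(n.+1 + n.+1) :=
  block_mx ((expi (lam + ph) * rc (cos th))%:M) ((expi ph * rc (sin th))%:M)
           ((expi lam * rc (sin th))%:M)        ((- rc (cos th))%:M).

(* W_0 = R(th_0, ph_0, lam);  W_{k+1} = R(th_{k+1}, ph_{k+1}, 0) A W_k.
   The operator of the statement is W_d. *)
Fixpoint qsp_prod n (U : 'M[C]_n.+1) (th ph : nat -> R) (lam : R) (k : nat)
  : 'M[C]_(n.+1 + n.+1) :=
  match k with
  | 0 => sp_op n (th 0) (ph 0) lam
  | k'.+1 => sp_op n (th k) (ph k) 0 *m sig_op U *m qsp_prod U th ph lam k'
  end.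

Definition qsp_op d n (U : 'M[C]_n.+1) (th ph : 'I_d.+1 -> R) (lam : R) :=
  qsp_prod U (fun k => th (inord k)) (fun k => ph (inord k)) lam d.

Definition has_block_form n (M : 'M[C]_(n.+1 + n.+1)) (U : 'M[C]_n.+1)
  (P Q : {poly C}) : Prop :=
  ulsubmx M = horner_mx U P /\ dlsubmx M = horner_mx U Q.

Definition qsp_achievable (d : nat) (P Q : {poly C}) : Prop :=
  (size P <= d.+1)%N /\ (size Q <= d.+1)%N /\
  forall x : C, `|x| = 1 -> `|P.[x]| ^+ 2 + `|Q.[x]| ^+ 2 = 1.

End QSP.

(* Main.v *)
Require Import Defs.
From HB Require Import structures.
From mathcomp Require Import all_boot all_order all_algebra.
From mathcomp Require Import complex.
From mathcomp Require Import reals trigo.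
From mathcomp Require Import ring lra zify.
Set Implicit Arguments. Unset Strict Implicit. Unset Printing Implicit Defensive.
Import Order.TTheory GRing.Theory Num.Theory.
Local Open Scope ring_scope.

Section S.
Variable R : realType.
Local Notation C := R[i].

Lemma unit_poly_eq0 (p : {poly C}) :
  (forall x : C, `|x| = 1 -> p.[x] = 0) -> p = 0.
Proof.
move=> H.
pose a (k : nat) : R := (k.+1%:R)^-1.
pose z (k : nat) : C := Complex (a k) (Num.sqrt (1 - a k ^+ 2)).
have a01 k : 0 < a k <= 1.
  rewrite /a invr_gt0 ltr0n /= invf_le1 ?ltr0n // ler1n //.
apply: (@roots_geq_poly_eq0 _ p (map z (iota 0 (size p)))).
- apply/allP => x /mapP [k _ ->]; apply/rootP; apply: H.
  rewrite normc_def /=.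
  have /andP [h1 h2] := a01 k.
  rewrite sqr_sqrtr; last by rewrite subr_ge0; nra.
  by rewrite addrC subrK sqrtr1.
- rewrite map_inj_uniq ?iota_uniq // => i j /(congr1 (@complex.Re R)) /=.
  rewrite /a => /invr_inj /eqP; rewrite eqr_nat eqSS => /eqP //.
- by rewrite size_map size_iota.
Qed.

Lemma horner_mx_scalar n (x : C) (p : {poly C}) :
  horner_mx (x%:M : 'M[C]_n.+1) p = (p.[x])%:M.
Proof.
elim/poly_ind: p => [|p c IH]; first by rewrite rmorph0 horner0 raddf0.
rewrite rmorphD rmorphM /= horner_mx_X horner_mx_C IH hornerMXaddC.
by rewrite raddfD /= scalar_mxM mulmxE.
Qed.

Lemma expi_norm (t : R) : `|expi t| = 1.
Proof. by rewrite normc_def /= cos2Dsin2 sqrtr1. Qed.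

Lemma expi0 : expi (0 : R) = 1.
Proof. by rewrite /expi cos0 sin0. Qed.

Lemma expiD (a b : R) : expi (a + b) = expi a * expi b.
Proof. by rewrite /expi cosD sinD /=; congr Complex; ring. Qed.

Lemma unit_expi (z : C) : `|z| = 1 -> exists t, expi t = z.
Proof.
case: z => a b; rewrite normc_def /= => /complexI h.
have hab : a ^+ 2 + b ^+ 2 = 1.
  by rewrite -[LHS]sqr_sqrtr ?h ?expr1n // addr_ge0 // sqr_ge0.
have ha : -1 <= a <= 1 by apply/andP; split; nra.
have hs : Num.sqrt (1 - a ^+ 2) = `|b|.
  by rewrite -sqrtr_sqr; congr Num.sqrt; lra.
have ca : cos (acos a) = a by rewrite acosK // in_itv.
case: (lerP 0 b) => hb.
- exists (acos a); rewrite /expi ca sin_acos // hs ger0_norm //.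
- exists (- acos a); rewrite /expi cosN sinN ca sin_acos // hs ltr0_norm //.
  by rewrite opprK.
Qed.

Lemma cs_angle (c s : R) : c ^+ 2 + s ^+ 2 = 1 -> exists t, cos t = c /\ sin t = s.
Proof.
move=> h; have [t ht] : exists t, expi t = Complex c s.
  by apply: unit_expi; rewrite normc_def /= h sqrtr1.
by exists t; case: ht.
Qed.

Lemma conj_rc (x : R) : (rc x)^* = rc x.
Proof. by apply: conj_Creal; rewrite /rc complex_real. Qed.


Definition al (t p : R) : C := expi (0 + p) * rc (cos t).
Definition be (t p : R) : C := expi p * rc (sin t).
Definition ga (t : R) : C := expi 0 * rc (sin t).
Definition de (t : R) : C := - rc (cos t).

Fixpoint colPQ (th ph : nat -> R) (lam : R) (k : nat) : {poly C} * {poly C} :=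
  match k with
  | 0 => ((expi (lam + ph 0) * rc (cos (th 0)))%:P, (expi lam * rc (sin (th 0)))%:P)
  | k'.+1 => ((al (th k) (ph k))%:P * 'X * (colPQ th ph lam k').1
               + (be (th k) (ph k))%:P * (colPQ th ph lam k').2,
              (ga (th k))%:P * 'X * (colPQ th ph lam k').1
               + (de (th k))%:P * (colPQ th ph lam k').2)
  end.

Lemma lsubmxM m p q1 q2 (M : 'M[C]_(m, p)) (N : 'M[C]_(p, q1 + q2)) :
  lsubmx (M *m N) = M *m lsubmx N.
Proof. by rewrite -{1}(hsubmxK N) mul_mx_row row_mxKl. Qed.

Lemma lsub_qsp n (U : 'M[C]_n.+1) th ph lam k :
  lsubmx (qsp_prod U th ph lam k) =
  col_mx (horner_mx U (colPQ th ph lam k).1) (horner_mx U (colPQ th ph lam k).2).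
Proof.
elim: k => [|k IH] /=.
  by rewrite /sp_op block_mxEh row_mxKl !horner_mx_C.
rewrite lsubmxM IH /sp_op /sig_op -mulmxA !mul_block_col.
rewrite ?mul0mx ?mulmx0 ?addr0 ?add0r ?mul1mx ?mulmx1.
rewrite !rmorphD !rmorphM /= !horner_mx_X !horner_mx_C -!mulmxE.
by rewrite /al /be /ga /de ?add0r !mulmxA.
Qed.

Lemma block_form_qsp n (U : 'M[C]_n.+1) th ph lam k :
  has_block_form (qsp_prod U th ph lam k) U
    (colPQ th ph lam k).1 (colPQ th ph lam k).2.
Proof.
rewrite /has_block_form.
have -> : ulsubmx (qsp_prod U th ph lam k) = usubmx (lsubmx (qsp_prod U th ph lam k)).
  by apply/matrixP => i j; rewrite !mxE.
have -> : dlsubmx (qsp_prod U th ph lam k) = dsubmx (lsubmx (qsp_prod U th ph lam k)).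
  by apply/matrixP => i j; rewrite !mxE.
by rewrite lsub_qsp col_mxKu col_mxKd.
Qed.

Lemma size_CXmul (c : C) (p : {poly C}) k :
  (size p <= k)%N -> (size (c%:P * 'X * p)%R <= k.+1)%N.
Proof.
move=> h; rewrite -mulrA mul_polyC (leq_trans (size_scale_leq _ _)) //.
rewrite (leq_trans (size_mul_leq _ _)) // size_polyX; move: h; case: (size p) => // m; rewrite ltnS => h /=; lia.
Qed.

Lemma size_Cmul (c : C) (p : {poly C}) k :
  (size p <= k)%N -> (size (c%:P * p)%R <= k)%N.
Proof. by move=> h; rewrite mul_polyC (leq_trans (size_scale_leq _ _)). Qed.

Lemma size_colPQ th ph lam k :
  (size (colPQ th ph lam k).1 <= k.+1)%N /\ (size (colPQ th ph lam k).2 <= k.+1)%N.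
Proof.
elim: k => [|k [IH1 IH2]] /=; first by rewrite !size_polyC_leq1.
split; rewrite (leq_trans (size_add _ _)) // geq_max size_CXmul //;
  by apply: size_Cmul; apply: (leq_trans IH2).
Qed.

Lemma norm_step (e x a b c s : C) :
  e * e^* = 1 -> x * x^* = 1 -> c^* = c -> s^* = s -> c * c + s * s = 1 ->
  `|e * c * x * a + e * s * b| ^+ 2 + `|s * x * a + (- c) * b| ^+ 2
  = `|a| ^+ 2 + `|b| ^+ 2.
Proof.
move=> He Hx Hc Hs Hcs.
rewrite !normCK !rmorphD !rmorphM !rmorphN /= Hc Hs.
have -> : (e * c * x * a + e * s * b) * (e^* * c * x^* * a^* + e^* * s * b^*) +
   (s * x * a + - c * b) * (s * x^* * a^* + - c * b^*) =
   (e * e^*) * (c * c * (x * x^*) * (a * a^*) + c * s * x * a * b^* + c * s * x^* * a^* * b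
     + s * s * (b * b^*)) +
   (s * s * (x * x^*) * (a * a^*) - c * s * x * a * b^* - c * s * x^* * a^* * b
     + c * c * (b * b^*)) by ring.
rewrite He Hx mul1r.
have -> : c * c * 1 * (a * a^*) + c * s * x * a * b^* + c * s * x^* * a^* * b +
  s * s * (b * b^*) + (s * s * 1 * (a * a^*) - c * s * x * a * b^* - c * s * x^* * a^* * b +
   c * c * (b * b^*)) = (c * c + s * s) * (a * a^* + b * b^*) by ring.
by rewrite Hcs mul1r.
Qed.

Lemma unit_conj (x : C) : `|x| = 1 -> x * x^* = 1.
Proof. by move=> h; rewrite -normCK h expr1n. Qed.

Lemma norm_colstep t p (P Q : {poly C}) (x : C) : `|x| = 1 ->
  `|((al t p)%:P * 'X * P + (be t p)%:P * Q).[x]| ^+ 2 +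
  `|((ga t)%:P * 'X * P + (de t)%:P * Q).[x]| ^+ 2 = `|P.[x]| ^+ 2 + `|Q.[x]| ^+ 2.
Proof.
move=> hx; rewrite !hornerE /al /be /ga /de add0r expi0 mul1r.
rewrite -(@norm_step (expi p) x P.[x] Q.[x] (rc (cos t)) (rc (sin t))) ?conj_rc //.
- by rewrite unit_conj // expi_norm.
- by rewrite unit_conj.
- by rewrite /rc -!rmorphM -rmorphD /= -!expr2 cos2Dsin2.
Qed.

Lemma norm_colPQ th ph lam k (x : C) : `|x| = 1 ->
  `|(colPQ th ph lam k).1.[x]| ^+ 2 + `|(colPQ th ph lam k).2.[x]| ^+ 2 = 1.
Proof.
move=> hx; elim: k => [|k IH] /=; last by rewrite norm_colstep.
rewrite !hornerC !normrM !expi_norm !mul1r /rc.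
rewrite !normc_def /= !expr0n /= !addr0 !sqrtr_sqr -!rmorphXn /= -rmorphD /=.
by rewrite !real_normK ?num_real // cos2Dsin2.
Qed.


Definition crev (D : nat) (P : {poly C}) : {poly C} := \poly_(i < D.+1) (P`_(D - i))^*.

Lemma crev_eval D (P : {poly C}) (x : C) : (size P <= D.+1)%N -> x * x^* = 1 ->
  (crev D P).[x] = x ^+ D * (P.[x])^*.
Proof.
move=> hP hx; rewrite /crev horner_poly (horner_coef_wide x hP) rmorph_sum mulr_sumr /=.
rewrite (reindex_inj rev_ord_inj) /=; apply: eq_bigr => i _.
have hi : (i <= D)%N by rewrite -ltnS.
rewrite subSS subKn // rmorphM rmorphXn /=.
have -> : x ^+ D = x ^+ (D - i) * x ^+ i by rewrite -exprD subnK.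
have -> : x ^+ (D - i) * x ^+ i * ((P`_i)^* * x^* ^+ i) =
  (P`_i)^* * x ^+ (D - i) * (x * x^*) ^+ i by rewrite exprMn; ring.
by rewrite hx expr1n mulr1.
Qed.

Lemma coef_top D (P Q : {poly C}) : (size P <= D.+1)%N -> (size Q <= D.+1)%N ->
  (P * Q)`_(D + D) = P`_D * Q`_D.
Proof.
move=> hP hQ; have hD : (D < (D + D).+1)%N by lia.
rewrite coefM (bigD1 (Ordinal hD)) //= addnK big1 ?addr0 // => j hj.
case: (ltngtP j D) => hjD.
- by rewrite [Q`__](leq_sizeP _ _ hQ) ?mulr0 //; lia.
- by rewrite [P`__](leq_sizeP _ _ hP) ?mul0r //.
- by move: hj; rewrite -val_eqE /= hjD eqxx.
Qed.

Lemma size_crev D P : (size (crev D P) <= D.+1)%N.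
Proof. exact: size_poly. Qed.

Lemma orth D (P Q : {poly C}) : (0 < D)%N -> (size P <= D.+1)%N -> (size Q <= D.+1)%N ->
  (forall x : C, `|x| = 1 -> `|P.[x]| ^+ 2 + `|Q.[x]| ^+ 2 = 1) ->
  P`_D * (P`_0)^* + Q`_D * (Q`_0)^* = 0.
Proof.
move=> D0 hP hQ hN.
have G0 : P * crev D P + Q * crev D Q - 'X^D = 0.
  apply: unit_poly_eq0 => x hx.
  rewrite !(hornerD, hornerN, hornerM, hornerXn) !crev_eval // ?unit_conj //.
  have -> : P.[x] * (x ^+ D * (P.[x])^*) + Q.[x] * (x ^+ D * (Q.[x])^*) - x ^+ D =
    x ^+ D * (P.[x] * (P.[x])^* + Q.[x] * (Q.[x])^*) - x ^+ D by ring.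
  by rewrite -!normCK hN // mulr1 subrr.
have := congr1 (fun p : {poly C} => p`_(D + D)) G0.
rewrite /= coefB coefD !coef_top ?size_crev // coefXn coef0.
have -> : (D + D == D) = false by apply/eqP; lia.
by rewrite subr0 /crev !coef_poly ltnSn subnn.
Qed.

Lemma norm_rc (a : C) : exists r : R, `|a| = rc r /\ 0 <= r.
Proof. exists (Num.sqrt (complex.Re a ^+ 2 + complex.Im a ^+ 2)); split; [exact: normc_def | exact: Num.Theory.sqrtr_ge0]. Qed.

Lemma L1 (a b : C) : exists c s p : R, c ^+ 2 + s ^+ 2 = 1 /\
  (expi p)^* * rc c * a + rc s * b = 0.
Proof.
have [->|a0] := eqVneq a 0.
  exists 1, 0, 0; split; first by rewrite expr0n expr1n addr0.
  by rewrite /rc !(rmorph0, mulr0, mul0r, addr0, add0r).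
have [->|b0] := eqVneq b 0.
  exists 0, 1, 0; split; first by rewrite expr0n expr1n add0r.
  by rewrite /rc !(rmorph0, mulr0, mul0r, addr0, add0r).
have [ra [ha ra0]] := norm_rc a; have [rb [hb rb0]] := norm_rc b.
have raN : ra != 0.
  by apply: contraNneq a0 => h; rewrite -normr_eq0 ha h /rc rmorph0.
have rbN : rb != 0.
  by apply: contraNneq b0 => h; rewrite -normr_eq0 hb h /rc rmorph0.
pose N := Num.sqrt (ra ^+ 2 + rb ^+ 2).
have hN2 : N ^+ 2 = ra ^+ 2 + rb ^+ 2 by rewrite sqr_sqrtr // addr_ge0 // sqr_ge0.
have NN : N != 0.
  apply/eqP => h; move: hN2; rewrite h expr0n /= => /esym/eqP.
  by rewrite paddr_eq0 ?sqr_ge0 // !sqrf_eq0 (negbTE raN).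
pose w : C := - (b * rc ra) / (rc rb * a).
have rcN (r : R) : r != 0 -> rc r != 0 by move=> h; rewrite /rc fmorph_eq0.
have hw : `|w^*| = 1.
  rewrite norm_conjC /w normf_div normrN !normrM -ha -hb !normr_id divff //.
  by rewrite mulf_neq0 // normr_eq0.
have [p hp] := unit_expi hw.
exists (rb / N), (ra / N), p; split.
  by rewrite !expr_div_n -mulrDl hN2 addrC divff // -hN2 sqrf_eq0.
rewrite hp conjCK /w /rc !fmorph_div /=.
field; by rewrite a0 !fmorph_eq0 NN rbN.
Qed.


Lemma conj_trick (E e c s p0 q0 pD qD : C) : E * e = 1 -> E^* = e -> c^* = c -> s^* = s ->
  pD * p0^* + qD * q0^* = 0 -> E * c * p0 + s * q0 = 0 -> (p0 != 0) || (q0 != 0) ->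
  E * s * pD + (- c) * qD = 0.
Proof.
move=> hEe hE hc hs hO hA hn.
have cA : e * c * p0^* + s * q0^* = 0.
  by have := congr1 Num.conj hA; rewrite rmorph0 rmorphD !rmorphM /= hE hc hs.
have h1 : p0^* * (E * s * pD + (- c) * qD) = E * s * (pD * p0^* + qD * q0^*)
   - qD * E * (e * c * p0^* + s * q0^*) + c * qD * p0^* * (E * e - 1) by ring.
have h2 : q0^* * (E * s * pD + (- c) * qD) = pD * E * (e * c * p0^* + s * q0^*)
   - c * pD * p0^* * (E * e - 1) - c * (pD * p0^* + qD * q0^*) by ring.
rewrite hO cA hEe subrr !mulr0 !subrr addr0 in h1.
rewrite hO cA hEe subrr !mulr0 !subrr in h2.
move: h1 h2 => /eqP; rewrite mulf_eq0 conjC_eq0 => /orP [] h1; last by move=> _; apply/eqP.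
move=> /eqP; rewrite mulf_eq0 conjC_eq0 => /orP [] h2; last by apply/eqP.
by move: hn; rewrite h1 h2.
Qed.

Lemma strip k (P Q : {poly C}) : (size P <= k.+2)%N -> (size Q <= k.+2)%N ->
  (forall x : C, `|x| = 1 -> `|P.[x]| ^+ 2 + `|Q.[x]| ^+ 2 = 1) ->
  exists t p (P' Q' : {poly C}), (size P' <= k.+1)%N /\ (size Q' <= k.+1)%N /\
    P = (al t p)%:P * 'X * P' + (be t p)%:P * Q' /\
    Q = (ga t)%:P * 'X * P' + (de t)%:P * Q'.
Proof.
move=> hP hQ hN.
have hO := orth (ltn0Sn k) hP hQ hN.
have [c [s [p [hcs [h0 hD]]]]] : exists c s p : R, c ^+ 2 + s ^+ 2 = 1 /\
    (expi p)^* * rc c * P`_0 + rc s * Q`_0 = 0 /\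
    (expi p)^* * rc s * P`_k.+1 + (- rc c) * Q`_k.+1 = 0.
  case: (boolP ((P`_0 != 0) || (Q`_0 != 0))) => hn.
    have [c [s [p [hcs hA]]]] := L1 (P`_0) (Q`_0).
    exists c, s, p; split => //; split => //.
    apply: (conj_trick (e := expi p)) hO hA hn; rewrite ?conjCK ?conj_rc //.
    by rewrite mulrC unit_conj // expi_norm.
  have [c [s [p [hcs hA]]]] := L1 (P`_k.+1) (- Q`_k.+1).
  exists s, c, p; split; first by rewrite addrC.
  move: hn; rewrite negb_or !negbK => /andP [/eqP -> /eqP ->].
  by rewrite !mulr0 addr0; split => //; rewrite mulNr -mulrN.
have [t [ct st]] := cs_angle hcs.
pose E := (expi p)^*.
pose T := (E * rc c)%:P * P + (rc s)%:P * Q.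
pose B := (E * rc s)%:P * P + (- rc c)%:P * Q.
have hT : (size T <= k.+2)%N.
  by rewrite (leq_trans (size_add _ _)) // geq_max !size_Cmul.
have hB : (size B <= k.+2)%N.
  by rewrite (leq_trans (size_add _ _)) // geq_max !size_Cmul.
have T0 : T`_0 = 0 by rewrite /T coefD !coefCM.
have BD : B`_k.+1 = 0 by rewrite /B coefD !coefCM.
have TX : 'X * drop_poly 1 T = T.
  rewrite -[RHS](poly_take_drop 1) expr1 mulrC.
  suff -> : take_poly 1 T = 0 by rewrite add0r.
  apply/polyP => i; rewrite coef_take_poly coef0; case: i => //.
have hEe : expi p * E = 1 by rewrite unit_conj // expi_norm.
have key (u v : C) : u%:P * T + v%:P * B =
    (u * E * rc c + v * E * rc s)%:P * P + (u * rc s - v * rc c)%:P * Q.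
  rewrite /T /B !(polyCD, polyCM, polyCN, polyCB); ring.
have hcs' : rc c * rc c + rc s * rc s = 1.
  by rewrite /rc -!rmorphM -rmorphD /= -!expr2 hcs.
exists t, p, (drop_poly 1 T), B; split.
  by rewrite size_drop_poly leq_subLR.
split.
  apply/leq_sizeP => j hj; case: (ltngtP j k.+1) => hjk.
  - by move: hj; rewrite leqNgt hjk.
  - by apply: (leq_sizeP _ _ hB).
  - by rewrite hjk.
rewrite -!mulrA TX !key /al /be /ga /de add0r expi0 mul1r ct st.
split.
  have -> : expi p * rc c * E * rc c + expi p * rc s * E * rc s =
    (expi p * E) * (rc c * rc c + rc s * rc s) by ring.
  have -> : expi p * rc c * rc s - expi p * rc s * rc c = 0 by ring.
  by rewrite hEe hcs' mulr1 mul0r addr0 mul1r.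
have -> : rc s * E * rc c + - rc c * E * rc s = 0 by ring.
have -> : rc s * rc s - - rc c * rc c = rc c * rc c + rc s * rc s by ring.
by rewrite hcs' mul0r add0r mul1r.
Qed.


Lemma colPQ_ext th ph th' ph' lam k :
  (forall i, (i <= k)%N -> th i = th' i /\ ph i = ph' i) ->
  colPQ th ph lam k = colPQ th' ph' lam k.
Proof.
elim: k => [|k IH] h /=.
  by have [-> ->] := h 0%N (leqnn 0).
have [-> ->] := h k.+1 (leqnn _).
by rewrite IH // => i hi; apply: h; apply: leqW.
Qed.

Lemma polar (z : C) : exists u : C, `|u| = 1 /\ z = `|z| * u.
Proof.
have [->|z0] := eqVneq z 0; first by exists 1; rewrite normr1 normr0 mul0r.
exists (z / `|z|); split.
  by rewrite normf_div normr_id divff // normr_eq0.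
by rewrite mulrC -mulrA mulVf ?mulr1 // normr_eq0.
Qed.

Lemma converse d : forall P Q : {poly C}, qsp_achievable d P Q ->
  exists th ph lam, colPQ th ph lam d = (P, Q).
Proof.
elim: d => [|d IH] P Q [hP [hQ hN]].
  have := hN 1 (normr1 _).
  rewrite [in P.[_]](size1_polyC hP) [in Q.[_]](size1_polyC hQ) !hornerC => h1.
  rewrite (size1_polyC hP) (size1_polyC hQ).
  have [u [hu pu]] := polar (P`_0); have [v [hv qv]] := polar (Q`_0).
  have [rp [hp _]] := norm_rc (P`_0); have [rq [hq _]] := norm_rc (Q`_0).
  have hpq : rp ^+ 2 + rq ^+ 2 = 1.
    apply: complexI; rewrite rmorphD !rmorphXn /= rmorph1; rewrite hp hq /rc in h1; exact: h1.
  have [t [ct st]] := cs_angle hpq.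
  have [l hl] := unit_expi hv.
  have huv : `|u * v^*| = 1 by rewrite normrM norm_conjC hu hv mulr1.
  have [f hf] := unit_expi huv.
  exists (fun _ => t), (fun _ => f), l => /=.
  rewrite ct st expiD hl hf.
  have -> : v * (u * v^*) = u * (v * v^*) by ring.
  rewrite unit_conj // mulr1 mulrC -hp -pu mulrC -hq -qv //.
have [t [p [P' [Q' [hP' [hQ' [eP eQ]]]]]]] := strip hP hQ hN.
have hN' : forall x : C, `|x| = 1 -> `|P'.[x]| ^+ 2 + `|Q'.[x]| ^+ 2 = 1.
  by move=> x hx; rewrite -(norm_colstep t p P' Q' hx) -eP -eQ hN.
have [th [ph [lam E]]] := IH P' Q' (conj hP' (conj hQ' hN')).
exists (fun i => if i == d.+1 then t else th i), (fun i => if i == d.+1 then p else ph i), lam.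
rewrite /= eqxx (@colPQ_ext _ _ th ph) ?E ?eP ?eQ //.
move=> i hi; have -> : (i == d.+1) = false by apply/eqP; lia.
by [].
Qed.

Lemma achievable_colPQ d th ph lam : qsp_achievable d (colPQ th ph lam d).1 (colPQ th ph lam d).2.
Proof.
have [h1 h2] := size_colPQ th ph lam d.
by split => //; split => // x hx; apply: norm_colPQ.
Qed.

Lemma unitary_scalar (x : C) : `|x| = 1 -> unitary_mx (x%:M : 'M[C]_1).
Proof.
move=> hx; rewrite /unitary_mx /adjmx map_scalar_mx tr_scalar_mx -!scalar_mxM.
by rewrite unit_conj // mulrC unit_conj.
Qed.

End S.

Theorem theorem3 (R : realType) (d : nat) :
  (forall P Q : {poly R[i]},
     (exists (th ph : 'I_d.+1 -> R) (lam : R),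
        forall (n : nat) (U : 'M[R[i]]_n.+1), unitary_mx U ->
          has_block_form (qsp_op U th ph lam) U P Q)
     <-> qsp_achievable d P Q)
  /\
  (forall (th ph : 'I_d.+1 -> R) (lam : R),
     exists P Q : {poly R[i]},
       qsp_achievable d P Q /\
       forall (n : nat) (U : 'M[R[i]]_n.+1), unitary_mx U ->
         has_block_form (qsp_op U th ph lam) U P Q).
Proof.
split.
  move=> P Q; split.
    case=> th [ph [lam H]].
    pose th' := fun k => th (inord k); pose ph' := fun k => ph (inord k).
    suff [-> ->] : P = (colPQ th' ph' lam d).1 /\ Q = (colPQ th' ph' lam d).2.
      exact: achievable_colPQ.
    have key (x : R[i]) : `|x| = 1 -> P.[x] = (colPQ th' ph' lam d).1.[x] /\
        Q.[x] = (colPQ th' ph' lam d).2.[x].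
      move=> hx; have [h1 h2] := H 0%N _ (unitary_scalar hx).
      have [g1 g2] := block_form_qsp (x%:M : 'M[R[i]]_1) th' ph' lam d.
      rewrite /qsp_op -/th' -/ph' in h1 h2.
      rewrite h1 in g1; rewrite h2 in g2.
      rewrite !horner_mx_scalar in g1 g2.
      move/matrixP/(_ ord0 ord0): g1; move/matrixP/(_ ord0 ord0): g2.
      by rewrite !mxE /= !mulr1n => -> ->.
    split; apply/eqP; rewrite -subr_eq0; apply/eqP; apply: unit_poly_eq0 => x hx;
      by rewrite hornerD hornerN ?(proj1 (key x hx)) ?(proj2 (key x hx)) subrr.
  move=> hA; have [th [ph [lam E]]] := converse hA.
  exists (fun i : 'I_d.+1 => th i), (fun i : 'I_d.+1 => ph i), lam => n U _.
  have := block_form_qsp U (fun k => th (@inord d k)) (fun k => ph (@inord d k)) lam d.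
  rewrite (@colPQ_ext _ _ _ th ph) ?E //.
  by move=> i hi; rewrite !inordK.
move=> th ph lam.
exists (colPQ (fun k => th (inord k)) (fun k => ph (inord k)) lam d).1.
exists (colPQ (fun k => th (inord k)) (fun k => ph (inord k)) lam d).2.
split; first exact: achievable_colPQ.
by move=> n U _; apply: block_form_qsp.
Qed.
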